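(* Let $G$ be a finite simple graph with a fixed total order on $E(G)$ and fix $\pi\in B_G$. Write $\nabla_G(\pi)=\{e_1<\dots<e_m\}$. Then \[\sum_{\sigma\in B_G,\ \sigma\supseteq\pi}(-1)^{\ell(\sigma)}=(-1)^{|C(G)|}\cdot N,\] where $N$ is the number of inclusion-wise maximal elements $T\in B_G$ with $T\supseteq\pi$ such that (if $m\ge1$) $e_1\notin T$, and for every $j>1$ with $e_j\in T$ there exists $i<j$ with $e_i\notin T$ such that $e_j$ lies on the unique cycle of $\mathcal{G}(T\cup\{e_i\})$ (the fundamental cycle of $e_i$ with respect to $T$).
   Context: A broken circuit is the edge set of a cycle of $G$ with its smallest edge removed; $B_G$ is the set of all $S\subseteq E(G)$ containing no broken circuit (each such $S$ is the edge set of a forest). For $S\subseteq E(G)$, $\mathcal{G}(S)=(V(G),S)$, $\ell(S)$ is the number of connected components of $\mathcal{G}(S)$, and $\nabla_G(S)$ is the set of edges of $G$ whose endpoints lie in different connected components of $\mathcal{G}(S)$. $|C(G)|$ is the number of connected components of $G$. *)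

(* Defs.v *)
From mathcomp Require Import all_boot all_order all_algebra.
Set Implicit Arguments. Unset Strict Implicit. Unset Printing Implicit Defensive.

(* A finite simple graph G = (V, E): V a finType, E a set of 2-element
   subsets of V.  An edge is a set {x, y} of two distinct vertices. *)
Section Graph.
Variable V : finType.
Notation edge := {set V}.

Definition adjS (S : {set edge}) : rel V :=
  fun x y => [exists e in S, e == [set x; y]] && (x != y).

Definition comp (S : {set edge}) (x : V) : {set V} :=
  [set y | connect (adjS S) x y].

Definition ell (S : {set edge}) : nat := #|[set comp S x | x : V]|.

Definition nabla (E S : {set edge}) : {set edge} :=
  [set e in E | [exists x : V, exists y : V,
     (e == [set x; y]) && ~~ connect (adjS S) x y]].

Definition is_cycle (E C : {set edge}) : bool :=
  [&& C \subset E, C != set0,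
      [forall v : V, (#|[set e in C | v \in e]| == 0) ||
                     (#|[set e in C | v \in e]| == 2)] &
      [forall x : V, forall y : V,
         ((x \in cover C) && (y \in cover C)) ==> connect (adjS C) x y]].

(* S contains no broken circuit (w.r.t. the total order on E given by rk):
   for every cycle C and its smallest edge e, C \ {e} is not a subset of S. *)
Definition noBC (E : {set edge}) (rk : edge -> nat) (S : {set edge}) : bool :=
  [forall C : {set edge}, is_cycle E C ==>
     [forall e in C, [forall f in C, rk e <= rk f] ==> ~~ (C :\ e \subset S)]].

Definition BG (E : {set edge}) (rk : edge -> nat) : {set {set edge}} :=
  [set S : {set edge} | (S \subset E) && noBC E rk S].

End Graph.

(* Main.v *)
Require Import Defs.
From mathcomp Require Import all_boot all_order all_algebra.
From mathcomp Require Import zify.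
Import GRing.Theory Num.Theory.
Set Implicit Arguments. Unset Strict Implicit. Unset Printing Implicit Defensive.


Section G.
Variable V : finType.
Notation edge := {set V}.
Implicit Types (S A C : {set edge}) (e f : edge) (x y u v a b : V).

Lemma adjS_sym S : symmetric (adjS S).
Proof. by move=> x y; rewrite /adjS setUC eq_sym. Qed.

Lemma conn_sym S : connect_sym (adjS S).
Proof. exact: sym_connect_sym (adjS_sym S). Qed.

Lemma adjS_mono S S' : S \subset S' -> subrel (adjS S) (adjS S').
Proof.
move=> sub x y /andP[/existsP[f /andP[fS ef]] xy]; apply/andP; split=> //.
by apply/existsP; exists f; rewrite (subsetP sub).
Qed.

Lemma conn_mono S S' : S \subset S' -> subrel (connect (adjS S)) (connect (adjS S')).
Proof. move=> sub; apply: connect_sub => x y h; apply: connect1; exact: adjS_mono h. Qed.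

Lemma set2_eqP x y a b : [set x; y] = [set a; b] -> (x = a /\ y = b) \/ (x = b /\ y = a).
Proof.
move=> h.
have xi : x \in [set a; b] by rewrite -h set21.
have yi : y \in [set a; b] by rewrite -h set22.
have ai : a \in [set x; y] by rewrite h set21.
have bi : b \in [set x; y] by rewrite h set22.
move: xi yi ai bi; rewrite !inE.
by do 4 (case/orP=> /eqP ?); subst; auto.
Qed.

Lemma adj_edge S x y : x != y -> [set x; y] \in S -> adjS S x y.
Proof. by move=> xy eS; rewrite /adjS xy andbT; apply/existsP; exists [set x; y]; rewrite eS eqxx. Qed.

Lemma adjSP S x y : adjS S x y -> [set x; y] \in S /\ x != y.
Proof. by case/andP=> /existsP[f /andP[fS /eqP <-]] ->. Qed.

Definition inc S e := [exists x, exists y, (e == [set x; y]) && connect (adjS S) x y].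

Lemma incP S x y : inc S [set x; y] = connect (adjS S) x y.
Proof.
apply/idP/idP => [/existsP[u /existsP[w /andP[/eqP h c]]] | c].
  case: (set2_eqP h) => [[-> ->]|[-> ->]] //; by rewrite conn_sym.
by apply/existsP; exists x; apply/existsP; exists y; rewrite eqxx.
Qed.

Lemma inc_mono S S' e : S \subset S' -> inc S e -> inc S' e.
Proof.
move=> sub /existsP[x /existsP[y /andP[/eqP -> c]]]; rewrite incP.
exact: conn_mono c.
Qed.

Lemma inc_self S e : #|e| = 2 -> e \in S -> inc S e.
Proof.
move/eqP/cards2P=> [x [y [xy ->]]] eS; rewrite incP; apply: connect1; exact: adj_edge.
Qed.

Lemma conn_trans S A :
  {in A, forall f, inc S f} -> subrel (connect (adjS (S :|: A))) (connect (adjS S)).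
Proof.
move=> hA; apply: connect_sub => x y /adjSP[]; rewrite inE => /orP[fS|fA] xy.
  by apply: connect1; apply: adj_edge.
by rewrite -incP; apply: hA.
Qed.

Lemma inc_trans S A e : {in A, forall f, inc S f} -> inc (S :|: A) e -> inc S e.
Proof.
move=> hA /existsP[x /existsP[y /andP[/eqP -> c]]]; rewrite incP.
exact: conn_trans c.
Qed.

Lemma conn_add S a b x y :
  connect (adjS (S :|: [set [set a; b]])) x y ->
  [\/ connect (adjS S) x y, connect (adjS S) x a && connect (adjS S) b y
    | connect (adjS S) x b && connect (adjS S) a y].
Proof.
move/connectP=> [p pth ->]; elim: p x pth => [|z p IH] x /=.
  by move=> _; apply: Or31; exact: connect0.
case/andP=> /adjSP[]; rewrite inE => /orP[zS|/set1P h] xz /IH [c|/andP[c1 c2]|/andP[c1 c2]].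
- apply: Or31; apply: connect_trans c; apply: connect1; exact: adj_edge.
- apply: Or32; rewrite c2 andbT; apply: connect_trans c1; apply: connect1; exact: adj_edge.
- apply: Or33; rewrite c2 andbT; apply: connect_trans c1; apply: connect1; exact: adj_edge.
- case: (set2_eqP h) => [[? ?]|[? ?]]; subst.
    by apply: Or32; apply/andP; split; [exact: connect0|].
  by apply: Or33; apply/andP; split; [exact: connect0|].
- case: (set2_eqP h) => [[? ?]|[? ?]]; subst.
    by apply: Or32; apply/andP; split; [exact: connect0|].
  by apply: Or31.
- case: (set2_eqP h) => [[? ?]|[? ?]]; subst.
    by apply: Or31.
  by apply: Or33; apply/andP; split; [exact: connect0|].
Qed.

Lemma inc_exch S e f : #|e| = 2 -> #|f| = 2 -> ~~ inc S e -> inc (S :|: [set f]) e ->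
  inc (S :|: [set e]) f.
Proof.
move/eqP/cards2P=> [a [b [ab ->]]] /eqP/cards2P [c [d [cd ->]]].
rewrite !incP => nab /conn_add [h|/andP[h1 h2]|/andP[h1 h2]]; first by rewrite h in nab.
- have e1 : connect (adjS (S :|: [set [set a; b]])) a b.
    by apply: connect1; apply: adj_edge => //; rewrite !inE eqxx orbT.
  have m := conn_mono (subsetUl S [set [set a; b]]).
  rewrite conn_sym in h1; apply: connect_trans (m _ _ h1) _.
  by apply: connect_trans e1 _; apply: m; rewrite conn_sym.
- have e1 : connect (adjS (S :|: [set [set a; b]])) b a.
    by rewrite conn_sym; apply: connect1; apply: adj_edge => //; rewrite !inE eqxx orbT.
  have m := conn_mono (subsetUl S [set [set a; b]]).
  apply: connect_trans (m _ _ h2) _.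
  by apply: connect_trans e1 _; apply: m.
Qed.

End G.


Section G.
Variable V : finType.
Notation edge := {set V}.
Implicit Types (S A C : {set edge}) (e f : edge) (x y u v a b : V).

Lemma comp_eq S x y : connect (adjS S) x y -> Defs.comp S x = Defs.comp S y.
Proof.
move=> c; apply/setP => z; rewrite !inE; apply/idP/idP => h.
  by apply: connect_trans h; rewrite conn_sym.
exact: connect_trans h.
Qed.

Lemma in_comp S x y : (y \in Defs.comp S x) = connect (adjS S) x y.
Proof. by rewrite inE. Qed.

Lemma ell_add S a b : a != b -> ~~ connect (adjS S) a b ->
  (ell (S :|: [set [set a; b]])).+1 = ell S.
Proof.
move=> ab nab.
set S' := S :|: [set [set a; b]].
set ca := Defs.comp S a; set cb := Defs.comp S b.
pose g (C : {set V}) := if (a \in C) || (b \in C) then ca :|: cb else C.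
have m := conn_mono (subsetUl S [set [set a; b]]).
have eab : connect (adjS S') a b.
  by apply: connect1; apply: adj_edge => //; rewrite !inE eqxx orbT.
have hc x : Defs.comp S' x = g (Defs.comp S x).
  rewrite /g /ca /cb !in_comp; apply/setP => y; rewrite !inE.
  case: (boolP (connect (adjS S) x a)) => xa /=; rewrite ?inE.
    have sxa : connect (adjS S) a x by rewrite conn_sym.
    apply/idP/idP.
      case/conn_add => [h|/andP[h1 h2]|/andP[h1 h2]].
      - by rewrite (connect_trans sxa h).
      - by rewrite h2 orbT.
      - by rewrite h2.
    case/orP => h; first exact: connect_trans (m _ _ xa) (m _ _ h).
    exact: connect_trans (m _ _ xa) (connect_trans eab (m _ _ h)).
  case: (boolP (connect (adjS S) x b)) => xb /=; rewrite ?inE.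
    have sxb : connect (adjS S) b x by rewrite conn_sym.
    apply/idP/idP.
      case/conn_add => [h|/andP[h1 h2]|/andP[h1 h2]].
      - by rewrite (connect_trans sxb h) orbT.
      - by rewrite h1 in xa.
      - by rewrite h2.
    have eba : connect (adjS S') b a by rewrite conn_sym.
    case/orP => h; last exact: connect_trans (m _ _ xb) (m _ _ h).
    exact: connect_trans (m _ _ xb) (connect_trans eba (m _ _ h)).
  apply/idP/idP; last exact: m.
  case/conn_add => [//|/andP[h1 h2]|/andP[h1 h2]].
  - by rewrite h1 in xa.
  - by rewrite h1 in xb.
rewrite /ell.
have -> : [set Defs.comp S' x | x : V] = g @: [set Defs.comp S x | x : V].
  by rewrite -imset_comp; apply: eq_imset => x; rewrite hc.
set A := [set Defs.comp S x | x : V].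
have caA : ca \in A by apply/imsetP; exists a.
have cbA : cb \in A by apply/imsetP; exists b.
have cab : ca != cb.
  apply/eqP => h; have : b \in ca by rewrite h in_comp connect0.
  by rewrite in_comp (negbTE nab).
have gca : g ca = ca :|: cb by rewrite /g (_ : a \in ca) // in_comp connect0.
have gcb : g cb = ca :|: cb by rewrite /g (_ : b \in cb) ?orbT // in_comp connect0.
have memA (C : {set V}) z : C \in A -> z \in C -> C = Defs.comp S z.
  by case/imsetP=> w _ -> ; rewrite in_comp => /comp_eq.
have -> : g @: A = g @: (A :\ ca).
  apply/setP => C0; apply/imsetP/imsetP => [[D DA ->]|[D DA ->]].
    case: (D =P ca) => [->|nD]; first by exists cb; rewrite ?gca ?gcb // !inE eq_sym cab.
    by exists D => //; rewrite !inE DA andbT; apply/eqP.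
  by exists D => //; move: DA; rewrite inE => /andP[].
rewrite card_in_imset; first by rewrite (cardsD1 ca A) caA.
move=> C0 D0; rewrite !inE => /andP[Cca CA] /andP[Dca DA].
have gen (E' : {set V}) : E' \in A -> E' != ca -> E' != cb -> g E' = E'.
  move=> EA n1 n2; rewrite /g.
  case: (boolP (a \in E')) => [aE|_]; first by rewrite (memA _ _ EA aE) eqxx in n1.
  case: (boolP (b \in E')) => [bE|_] //; by rewrite (memA _ _ EA bE) eqxx in n2.
have aU : a \in ca :|: cb by rewrite !inE connect0.
case: (C0 =P cb) => [->|nC]; case: (D0 =P cb) => [->|nD] //.
- rewrite gcb gen //; last by apply/eqP.
  move=> h; move: aU; rewrite h => /(memA _ _ DA) h'; by rewrite h' eqxx in Dca.
- rewrite gcb gen //; last by apply/eqP.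
  move=> h; move: aU; rewrite -h => /(memA _ _ CA) h'; by rewrite h' eqxx in Cca.
- by rewrite !gen //; apply/eqP.
Qed.

End G.


Lemma card_cond (T : finType) (A : {set T}) (P : pred T) :
  #|[set x in A | P x]| = \sum_(x in A) (P x : nat).
Proof.
rewrite -sum1_card big_mkcond [RHS]big_mkcond /=.
by apply: eq_bigr => x _; rewrite !inE; case: (x \in A); case: (P x).
Qed.

Section G.
Variable V : finType.
Notation edge := {set V}.
Implicit Types (S A C : {set edge}) (e f : edge) (x y u v a b : V).

Definition deg C v := #|[set f in C | v \in f]|.

Lemma cyc_B (E : {set edge}) C e : {in E, forall f, #|f| = 2} -> is_cycle E C -> e \in C ->
  inc (C :\ e) e.
Proof.
move=> HE /and4P[sCE _ /forallP hdeg _] eC.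
have := HE e (subsetP sCE e eC); move/eqP/cards2P => [x [y [xy ee]]].
rewrite {2}ee incP; apply/idPn => nc.
set C' := C :\ e.
set K := [set z | connect (adjS C') x z].
have xK : x \in K by rewrite inE connect0.
have yK : y \notin K by rewrite inE.
have hsum : \sum_(v in K) deg C' v = \sum_(f in C') #|[set v in K | v \in f]|.
  rewrite /deg; under eq_bigr => v _ do rewrite card_cond.
  rewrite exchange_big /=; apply: eq_bigr => f _; by rewrite card_cond.
have even_r : ~~ odd (\sum_(f in C') #|[set v in K | v \in f]|).
  apply: (big_ind (fun n => ~~ odd n)) => //.
    by move=> m n hm hn; rewrite oddD (negbTE hm) (negbTE hn).
  move=> f fC'.
  have fC : f \in C by move: fC'; rewrite !inE => /andP[].
  have := HE f (subsetP sCE f fC); move/eqP/cards2P => [u [w [uw ef]]].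
  have auw : adjS C' u w by apply: adj_edge => //; rewrite -ef.
  case: (boolP (u \in K)) => uK.
    have wK : w \in K by move: uK; rewrite !inE => h; apply: connect_trans h (connect1 auw).
    have -> : [set v in K | v \in f] = f.
      apply/setP => z; move: (uK) (wK); rewrite !inE ef !inE => uK' wK'.
      case: (z =P u) => [->|_]; first by rewrite uK'.
      case: (z =P w) => [->|_]; first by rewrite wK'.
      by rewrite andbF.
    by rewrite ef cards2 uw.
  have wK : w \notin K.
    apply: contra uK; rewrite !inE => h; apply: connect_trans h _.
    by rewrite conn_sym; apply: connect1.
  have -> : [set v in K | v \in f] = set0.
    apply/setP => z; move: (uK) (wK); rewrite !inE ef !inE => uK' wK'.
    case: (z =P u) => [->|_]; first by rewrite (negbTE uK').
    case: (z =P w) => [->|_]; first by rewrite (negbTE wK').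
    by rewrite andbF.
  by rewrite cards0.
have degC v : (deg C v == 0) || (deg C v == 2) := hdeg v.
have degx : deg C' x = 1.
  have h1 : [set f in C' | x \in f] = [set f in C | x \in f] :\ e.
    by apply/setP => f; rewrite !inE; case: (f == e); rewrite ?andbF.
  have eA : e \in [set f in C | x \in f] by rewrite !inE eC ee !inE eqxx.
  rewrite /deg h1; move: (degC x); rewrite /deg (cardsD1 e) eA /=.
  by move=> /eqP; rewrite add1n => -[].
have degv v : v \in K -> v != x -> ~~ odd (deg C' v).
  move=> vK vx.
  have vy : v != y by apply: contraNneq yK => <-.
  have -> : deg C' v = deg C v.
    rewrite /deg (_ : [set f in C' | v \in f] = [set f in C | v \in f]) //; apply/setP => f; rewrite !inE.
    case: (f =P e) => [->|] //=; rewrite ee !inE (negbTE vx) (negbTE vy) /=.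
    by rewrite andbF.
  by case/orP: (degC v) => /eqP ->.
move: even_r; rewrite -hsum (bigD1 x) //= degx /=.
rewrite negbK add0n; apply/negP.
apply: (big_ind (fun n => ~~ odd n)) => //.
  by move=> m n hm hn; rewrite oddD (negbTE hm) (negbTE hn).
by move=> v /andP[vK vx]; apply: degv.
Qed.

End G.


Lemma ordS_neq n (j : 'I_n) : 2 < n -> ordS j != j.
Proof.
move=> hn; apply/eqP => /(congr1 val) /=; have := ltn_ord j.
case: (ltngtP j.+1 n) => h hj.
- by rewrite modn_small //; lia.
- lia.
- by rewrite h modnn; lia.
Qed.

Lemma ordS_pred_neq n (j : 'I_n) : 2 < n -> ordS j != ord_pred j.
Proof.
move=> hn; apply/eqP => /(congr1 val) /=; have := ltn_ord j.
move=> hj h.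
have e1 : j.+1 %% n = if j.+1 == n then 0 else j.+1.
  case: eqP => [->|ne]; first by rewrite modnn.
  by rewrite modn_small //; lia.
have e2 : (j + n).-1 %% n = if (j == 0 :> nat) then n.-1 else j.-1.
  case: eqP => [->|ne]; first by rewrite add0n modn_small //; lia.
  have -> : (j + n).-1 = j.-1 + n by rewrite -!subn1; lia.
  by rewrite modnDr modn_small //; lia.
move: h; rewrite e1 e2; do 2 case: eqP => ?; lia.
Qed.

Section G.
Variable V : finType.
Notation edge := {set V}.

Lemma ring_cycle (E : {set edge}) n (vt : 'I_n -> V) : 2 < n -> injective vt ->
  (forall i, [set vt i; vt (ordS i)] \in E) ->
  is_cycle E [set [set vt i; vt (ordS i)] | i : 'I_n].
Proof.
move=> hn inj hE.
set C := [set [set vt i; vt (ordS i)] | i : 'I_n].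
have n0 : 0 < n by lia.
pose i0 : 'I_n := Ordinal n0.
have adjC i : adjS C (vt i) (vt (ordS i)).
  apply: adj_edge; last by apply/imsetP; exists i.
  by apply/eqP => /inj /eqP; rewrite eq_sym (negbTE (ordS_neq i hn)).
have conn0 i : connect (adjS C) (vt i0) (vt i).
  case: i => m hm.
  elim: m hm => [|m IH] hm; first by rewrite (_ : Ordinal hm = i0) ?connect0 //; exact: val_inj.
  have hm' : m < n by lia.
  apply: connect_trans (IH hm') (connect1 _).
  rewrite (_ : Ordinal hm = ordS (Ordinal hm')) //; apply: val_inj => /=.
  by rewrite modn_small.
apply/and4P; split.
- by apply/subsetP => f /imsetP[i _ ->].
- by apply/set0Pn; exists [set vt i0; vt (ordS i0)]; apply/imsetP; exists i0.
- apply/forallP => v.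
  case: (boolP [exists j, vt j == v]) => [/existsP[j /eqP <-]|nv].
    apply/orP; right.
    have -> : [set f in C | vt j \in f] =
       [set [set vt j; vt (ordS j)]; [set vt (ord_pred j); vt j]].
      apply/setP => f; rewrite !inE; apply/idP/idP.
        case/andP => /imsetP[i _ ->]; rewrite !inE => /orP[] /eqP /inj h.
          by rewrite h eqxx.
        by rewrite h ordSK eqxx orbT.
      case/orP => /eqP ->.
        by rewrite set21 andbT; apply/imsetP; exists j.
      rewrite set22 andbT; apply/imsetP; exists (ord_pred j) => //.
      by rewrite ord_predK.
    rewrite cards2; suff -> : ([set vt j; vt (ordS j)] != [set vt (ord_pred j); vt j]) by [].
    apply/eqP => /set2_eqP [[h1 h2]|[h1 h2]].
      by move/inj: h2 => h2; have := ordS_neq j hn; rewrite h2 eqxx.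
    by move/inj: h2 => h2; have := ordS_pred_neq j hn; rewrite h2 eqxx.
  apply/orP; left; rewrite cards_eq0; apply/eqP/setP => f; rewrite !inE.
  apply/negbTE; apply/negP => /andP[/imsetP[i _ ->]]; rewrite !inE => /orP[] /eqP h.
    by move/existsP: nv; apply; exists i; rewrite h.
  by move/existsP: nv; apply; exists (ordS i); rewrite h.
- apply/forallP => x; apply/forallP => y; apply/implyP => /andP[].
  rewrite /cover => /bigcupP[f /imsetP[i _ ->] xi] /bigcupP[g /imsetP[k _ ->] yk].
  have hx : connect (adjS C) (vt i0) x.
    by move: xi; rewrite !inE => /orP[] /eqP ->; apply: conn0.
  have hy : connect (adjS C) (vt i0) y.
    by move: yk; rewrite !inE => /orP[] /eqP ->; apply: conn0.
  by apply: connect_trans hy; rewrite conn_sym.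
Qed.

End G.


Section G.
Variable V : finType.
Notation edge := {set V}.

Lemma cyc_A (E S : {set edge}) a b : S \subset E -> [set a; b] \in E -> a != b ->
  [set a; b] \notin S -> connect (adjS S) a b ->
  exists C, [/\ is_cycle E C, C \subset S :|: [set [set a; b]] & [set a; b] \in C].
Proof.
move=> sSE eE ab eS /connectP[p0 pth0 lst0].
move: eE ab eS; rewrite lst0; case: (shortenP pth0) => p pth uq _.
move lst: (last a p) => b'; clear lst0 b => eE ab eS; rename b' into b.
have hn : 2 < size (a :: p).
  move: pth uq lst; case: p => [|z [|z' p']] //=.
    by move=> _ _ h; rewrite h eqxx in ab.
  move=> /andP[/adjSP[h _] _] _ hz; subst; by rewrite h in eS.
set c := a :: p in hn *.
set n := size c in hn *.
pose vt (i : 'I_n) := nth a c i.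
have inj : injective vt.
  by move=> i j /eqP; rewrite /vt nth_uniq // => /eqP /val_inj.
have edges i : [set vt i; vt (ordS i)] \in S :|: [set [set a; b]].
  rewrite /vt /=; case: (ltngtP i.+1 n) => h.
  - rewrite modn_small // inE; apply/orP; left.
    have hi : i < size p by move: h; rewrite /n /c /=.
    by case/adjSP: (pathP a pth i hi).
  - by have := ltn_ord i; lia.
  - rewrite h modnn /= inE; apply/orP; right.
    have -> : nth a c i = b.
      by rewrite -lst /c (last_nth a) (_ : val i = size p) //; move: h; rewrite /n /c /=; lia.
    by rewrite setUC inE.
have := ring_cycle (E := E) hn inj.
set C := [set _ | i : 'I_n] => hC.
exists C; split.
- apply: hC => i; have := edges i; rewrite inE => /orP[/(subsetP sSE)//|].
  by rewrite inE => /eqP ->.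
- by apply/subsetP => f /imsetP[i _ ->].
- have hn0 : n.-1 < n by lia.
  apply/imsetP; exists (Ordinal hn0) => //.
  rewrite /vt /=.
  have -> : n.-1.+1 %% n = 0 by rewrite prednK ?modnn //; lia.
  have -> : nth a c n.-1 = b by rewrite -lst /c (last_nth a).
  by rewrite setUC.
Qed.

End G.

Section PairSum.
Local Open Scope ring_scope.

Lemma pair_sum (T : finType) (P : pred T) (tg : T -> T) (w : T -> int) :
  involutive tg -> (forall x, P x -> P (tg x) -> w (tg x) = - w x) ->
  \sum_(x | P x) w x = \sum_(x | P x && ~~ P (tg x)) w x.
Proof.
move=> inv hw; rewrite (bigID (fun x => P (tg x))) /=.
have -> : \sum_(x | P x && P (tg x)) w x = 0.
  set s := LHS; have : s = - s.
    rewrite {1}/s (reindex_inj (inv_inj inv)) /= /s -sumrN.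
    apply: eq_big => x; first by rewrite inv andbC.
    move=> /andP[h1 h2]; apply: hw => //; by rewrite -(inv x).
  move=> h; lia.
by rewrite add0r.
Qed.
End PairSum.

Section Main.
Local Open Scope nat_scope.
Variable V : finType.
Notation edge := {set V}.
Variable E : {set edge}.
Variable rk : edge -> nat.
Hypothesis HE : forall e, e \in E -> #|e| = 2.
Hypothesis Hrk : {in E &, injective rk}.
Implicit Types (S T U C : {set edge}) (e f k : edge).

Lemma B_subE S : S \in BG E rk -> S \subset E.
Proof. by rewrite inE => /andP[]. Qed.

Lemma B_sub S S' : S \in BG E rk -> S' \subset S -> S' \in BG E rk.
Proof.
rewrite !inE => /andP[sE /forallP nb] sub; rewrite (subset_trans sub sE) /=.
apply/forallP => C; apply/implyP => cC; apply/forallP => e; apply/implyP => eC.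
apply/implyP => me; have := nb C; rewrite cC /= => /forallP /(_ e); rewrite eC /= me /=.
by apply: contra => h; apply: subset_trans h sub.
Qed.

Lemma cyc_min C : is_cycle E C -> exists2 m, m \in C & forall f, f \in C -> rk m <= rk f.
Proof.
case/and4P => _ /set0Pn [f0 f0C] _ _.
case: (arg_minnP rk f0C) => m mC hm; by exists m.
Qed.

Lemma edge2 e : e \in E -> exists a b, a != b /\ e = [set a; b].
Proof. by move/HE/eqP/cards2P. Qed.

Lemma B_add_ninc S e : S \subset E -> e \in E -> e \notin S -> S :|: [set e] \in BG E rk ->
  ~~ inc S e.
Proof.
move=> sE eE eS hB; apply/negP => hi.
have [a [b [ab ee]]] := edge2 eE.
move: hi eS eE hB; rewrite ee incP => hc eS eE hB.
have [C [cC sub eC]] := cyc_A sE eE ab eS hc.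
have [m mC hm] := cyc_min cC.
move: hB; rewrite inE => /andP[_ /forallP /(_ C)]; rewrite cC /= => /forallP /(_ m).
rewrite mC /=; have -> : [forall f in C, rk m <= rk f] by apply/forallP => f; apply/implyP; apply: hm.
rewrite /= => /negP; apply; apply: subset_trans (subsetDl _ _) sub.
Qed.

Lemma B_ninc S e : S \in BG E rk -> e \in S -> ~~ inc (S :\ e) e.
Proof.
move=> hB eS; have sE := B_subE hB.
apply: B_add_ninc.
- exact: subset_trans (subsetDl _ _) sE.
- exact: subsetP sE e eS.
- by rewrite !inE eqxx.
- by rewrite setUC setD1K.
Qed.

Lemma B_add S e : S \in BG E rk -> e \in E -> ~~ inc S e ->
  (forall f, f \in E -> rk f < rk e -> inc S f) -> S :|: [set e] \in BG E rk.
Proof.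
move=> hB eE ne hf; have sE := B_subE hB.
rewrite inE; apply/andP; split.
  by rewrite subUset sE sub1set eE.
apply/forallP => C; apply/implyP => cC; apply/forallP => m; apply/implyP => mC.
apply/implyP => /forallP hm; apply/negP => sub.
have hmin f : f \in C -> rk m <= rk f by move=> fC; have := hm f; rewrite fC.
have sCE : C \subset E by case/and4P: cC.
case: (boolP (e \in C)) => eC; last first.
  move: hB; rewrite inE => /andP[_ /forallP /(_ C)]; rewrite cC /= => /forallP /(_ m).
  rewrite mC /=; have -> : [forall f in C, rk m <= rk f] by apply/forallP => f; apply/implyP; apply: hmin.
  rewrite /= => /negP; apply; apply/subsetP => f fC.
  have := subsetP sub f fC; rewrite !inE => /orP[//|/eqP fe].
  by move: fC; rewrite inE fe (negbTE eC) andbF.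
have hce := cyc_B HE cC eC.
case: (m =P e) => [me|nme].
  apply: (negP ne); apply: inc_mono hce; apply/subsetP => f; rewrite -me => fC.
  have := subsetP sub f fC; rewrite !inE; move: fC; rewrite !inE => /andP[fm _].
  by rewrite me in fm; rewrite (negbTE fm) orbF.
have mE : m \in E := subsetP sCE m mC.
have rme : rk m < rk e.
  rewrite ltn_neqAle hmin // andbT; apply/eqP => h; apply: nme; exact: Hrk h.
have im : inc S m := hf m mE rme.
apply: (negP ne); apply: (inc_trans (A := [set m])); first by move=> f /set1P ->.
apply: inc_mono hce; apply/subsetP => f; rewrite !inE => /andP[fe fC].
case: (f =P m) => [->|/eqP fm]; first by rewrite orbT.
have := subsetP sub f; rewrite !inE fC fm (negbTE fe) /= orbF.
by apply.
Qed.

Lemma nablaE S e : e \in E -> (e \in nabla E S) = ~~ inc S e.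
Proof.
move=> eE; have [a [b [ab ee]]] := edge2 eE; rewrite ee in eE *; rewrite incP inE eE /=.
apply/idP/idP.
  case/existsP => x /existsP [y /andP[/eqP h nc]].
  by case: (set2_eqP h) => [[-> ->]|[-> ->]] //; rewrite conn_sym.
by move=> h; apply/existsP; exists a; apply/existsP; exists b; rewrite eqxx.
Qed.

Lemma ell_span S : S \subset E -> (forall e, e \in E -> inc S e) -> ell S = ell E.
Proof.
move=> sE hs.
have eqc x y : connect (adjS S) x y = connect (adjS E) x y.
  apply/idP/idP; first exact: conn_mono.
  move=> h; apply: (conn_trans (A := E)); first by move=> f; apply: hs.
  by rewrite (setUidPr sE).
rewrite /ell (_ : [set Defs.comp S x | x : V] = [set Defs.comp E x | x : V]) //.
by apply: eq_imset => x; apply/setP => y; rewrite !inE eqc.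
Qed.

End Main.


Section Main2.
Variable V : finType.
Notation edge := {set V}.
Variable E : {set edge}.
Variable rk : edge -> nat.
Hypothesis HE : forall e, e \in E -> #|e| = 2.
Hypothesis Hrk : {in E &, injective rk}.
Variable pi : {set edge}.
Hypothesis Hpi : pi \in BG E rk.
Implicit Types (S T U C : {set edge}) (e f k : edge).

Definition nab := nabla E pi.
Definition cond S e := inc S e && ((e \in S) ==>
  [exists k in nab, [&& rk k < rk e, k \notin S & ~~ inc (S :\ e) k]]).
Definition Gt t S := [&& S \in BG E rk, pi \subset S & [forall e in nab, (rk e < t) ==> cond S e]].
Definition tog e S := if e \in S then S :\ e else S :|: [set e].

Lemma nab_E e : e \in nab -> e \in E.
Proof. by rewrite inE => /andP[]. Qed.

Lemma nab_ninc e : e \in nab -> ~~ inc pi e.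
Proof. by move=> h; rewrite -(nablaE HE) // nab_E. Qed.

Lemma nab_pi e : e \in nab -> e \notin pi.
Proof. move=> h; apply: contra (nab_ninc h); apply: inc_self; exact: HE (nab_E h). Qed.

Lemma GtP t S : Gt t S -> forall f, f \in nab -> rk f < t -> cond S f.
Proof. by case/and3P=> _ _ /forallP h f fn ft; have := h f; rewrite fn ft. Qed.

Lemma Gt_cl t S : Gt t S -> forall f, f \in E -> rk f < t -> inc S f.
Proof.
move=> g f fE ft; case: (boolP (f \in nab)) => fn.
  by case/andP: (GtP g fn ft).
have := fn; rewrite (nablaE HE) // negbK; apply: inc_mono.
by case/and3P: g.
Qed.

Lemma tog_inv e : involutive (tog e).
Proof.
move=> S; rewrite /tog; case: (boolP (e \in S)) => eS.
  by rewrite !inE eqxx /= setUC setD1K.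
by rewrite !inE eqxx orbT setUC setU1K.
Qed.


Lemma Gt_succ t e S : e \in nab -> rk e = t -> Gt t.+1 S = Gt t S && cond S e.
Proof.
move=> en et; apply/idP/idP.
  case/and3P => hB hpi /forallP h; rewrite /Gt hB hpi /=; apply/andP; split.
    apply/forallP => f; apply/implyP => fn; apply/implyP => ft.
    by have := h f; rewrite fn /= ltnS (ltnW ft).
  by have := h e; rewrite en et ltnSn.
case/andP => /and3P[hB hpi /forallP h] ce; rewrite /Gt hB hpi /=.
apply/forallP => f; apply/implyP => fn; apply/implyP; rewrite ltnS leq_eqVlt.
case/orP => [/eqP ft|ft]; last by have := h f; rewrite fn ft.
have -> // : f = e by apply: Hrk; rewrite ?nab_E // ft et.
Qed.

Lemma Gt_none t S : (forall f, f \in nab -> rk f != t) -> Gt t.+1 S = Gt t S.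
Proof.
move=> hn; rewrite /Gt; congr [&& _, _ & _]; apply: eq_forallb => f.
case: (boolP (f \in nab)) => //= fn; rewrite ltnS leq_eqVlt.
by rewrite (negbTE (hn f fn)).
Qed.

Lemma step t e S : e \in nab -> rk e = t -> Gt t S -> cond S e = ~~ Gt t (tog e S).
Proof.
move=> en et g.
have eE := nab_E en.
have /and3P[hB hpi _] := g.
have sE := B_subE hB.
rewrite /tog; case: (boolP (e \in S)) => eS.
  rewrite /cond (inc_self (HE eE) eS) /= eS /=.
  apply/idP/idP.
    case/existsP => k /andP[kn /and3P[kr kS ki]].
    apply/negP => /GtP /(_ k kn); rewrite -et => /(_ kr) /andP[h _].
    by rewrite h in ki.
  apply: contraR => nex.
  rewrite /Gt (B_sub hB (subsetDl _ _)) /=.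
  apply/andP; split.
    apply/subsetP => x xp; rewrite !inE (subsetP hpi x xp) andbT.
    by apply: contraNneq (nab_pi en) => <-.
  apply/forallP => f; apply/implyP => fn; apply/implyP => ft.
  have fe : f != e by apply: contraTneq ft => ->; rewrite et ltnn.
  have /andP[icf cf2] := GtP g fn ft.
  apply/andP; split.
    case: (boolP (f \in S)) => fS.
      by apply: inc_self; [exact: HE (nab_E fn)| rewrite !inE fe fS].
    apply: contraR nex => ni; apply/existsP; exists f; rewrite fn /= et ft fS /=.
    exact: ni.
  apply/implyP; rewrite !inE => /andP[_ fS]; move: cf2; rewrite fS /=.
  case/existsP => k /andP[kn /and3P[kr kS ki]].
  apply/existsP; exists k; rewrite kn kr !inE (negbTE kS) andbF /=.
  apply: contra ki; apply: inc_mono; apply/subsetP => x; rewrite !inE.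
  by case/and3P => -> _ ->.
rewrite /cond (negbTE eS) /= andbT.
case: (boolP (inc S e)) => ie.
  apply/esym/negP => /and3P[hB' _ _].
  by have := B_add_ninc HE sE eE eS hB'; rewrite ie.
have hB' : S :|: [set e] \in BG E rk.
  apply: B_add => // f fE fr; apply: (Gt_cl g fE); by rewrite -et.
apply/esym; apply: negbF.
rewrite /Gt hB' (subset_trans hpi (subsetUl _ _)) /=.
apply/forallP => f; apply/implyP => fn; apply/implyP => ft.
have /andP[icf cf2] := GtP g fn ft.
apply/andP; split; first exact: inc_mono (subsetUl _ _) icf.
apply/implyP => fSe.
have fe : f != e by apply: contraTneq ft => ->; rewrite et ltnn.
have fS : f \in S by move: fSe; rewrite !inE (negbTE fe) orbF.
move: cf2; rewrite fS /= => /existsP[k /andP[kn /and3P[kr kS ki]]].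
have kE := nab_E kn.
have ke : k != e.
  apply: contraTneq kr => ->; rewrite -leqNgt; apply: ltnW; by rewrite et.
apply/existsP; exists k; rewrite kn kr !inE (negbTE kS) (negbTE ke) /=.
apply/negP => h.
have h1 : inc ((S :\ f) :|: [set e]) k.
  apply: inc_mono h; apply/subsetP => x; rewrite !inE.
  by case/andP => -> /orP[->|->]; rewrite ?orbT.
have h2 := inc_exch (HE kE) (HE eE) ki h1.
have h3 : inc (S :|: [set k]) e.
  apply: inc_mono h2; apply/subsetP => x; rewrite !inE.
  by case/orP => [/andP[_ ->]|->]; rewrite ?orbT.
have ik : inc S k by apply: (Gt_cl g kE); apply: ltn_trans kr ft.
move/negP: ie; apply; apply: (inc_trans (A := [set k])) h3.
by move=> x /set1P ->.
Qed.

Lemma w_tog e S : e \in E -> S \in BG E rk -> tog e S \in BG E rk ->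
  ((-1) ^+ ell (tog e S) = - (-1) ^+ ell S :> int)%R.
Proof.
move=> eE hB hB'; have [a [b [ab ee]]] := edge2 HE eE.
move: hB'; rewrite /tog; case: (boolP (e \in S)) => eS hB'.
  have ni := B_ninc HE hB eS.
  have := ell_add (S := S :\ e) ab; rewrite -incP -ee => /(_ ni).
  rewrite setUC setD1K // => <-.
  by rewrite exprS mulN1r.
have ni := B_add_ninc HE (B_subE hB) eE eS hB'.
have := ell_add (S := S) ab; rewrite -incP -ee => /(_ ni) <-.
by rewrite exprS mulN1r opprK.
Qed.


Lemma sum_Gt t : (\sum_(S | Gt 0 S) (-1) ^+ ell S = \sum_(S | Gt t S) (-1) ^+ ell S :> int)%R.
Proof.
elim: t => // t IH; rewrite IH.
case: (pickP [pred f in nab | rk f == t]) => [e /andP[en /eqP et] | hn].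
  rewrite (pair_sum (tg := tog e)); last 2 first.
  - exact: tog_inv.
  - move=> S g g'; apply: w_tog; first exact: nab_E.
      by case/and3P: g.
    by case/and3P: g'.
  apply: eq_bigl => S; rewrite (Gt_succ S en et).
  by case g : (Gt t S) => //=; rewrite (step en et g).
apply: eq_bigl => S; rewrite Gt_none // => f fn.
by have := hn f; rewrite /= fn /= => ->.
Qed.

Lemma Gt0 S : Gt 0 S = (S \in BG E rk) && (pi \subset S).
Proof.
rewrite /Gt; case: (S \in BG E rk); case: (pi \subset S) => //=.
by apply/forallP => e; apply/implyP => _.
Qed.

Definition tmax := (\max_(f in E) rk f).+1.

Lemma Gt_max S : Gt tmax S = [&& S \in BG E rk, pi \subset S & [forall e in nab, cond S e]].
Proof.
rewrite /Gt; congr [&& _, _ & _]; apply: eq_forallb => e.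
case: (boolP (e \in nab)) => //= en.
by rewrite ltnS leq_bigmax_cond // nab_E.
Qed.

Lemma spanS S : S \in BG E rk -> pi \subset S -> (forall e, e \in nab -> cond S e) ->
  forall f, f \in E -> inc S f.
Proof.
move=> hB hpi hc f fE; case: (boolP (f \in nab)) => fn.
  by case/andP: (hc f fn).
have := fn; rewrite (nablaE HE) // negbK; exact: inc_mono.
Qed.

Lemma Nset_iff T : [&& T \in BG E rk, pi \subset T & [forall e in nab, cond T e]] =
  [&& maxset (fun S => S \in BG E rk) T, pi \subset T,
      [forall e1 in nabla E pi,
         [forall f in nabla E pi, (rk e1 <= rk f)] ==> (e1 \notin T)] &
      [forall ej in nabla E pi,
         ((ej \in T) && [exists f in nabla E pi, (rk f < rk ej)]) ==>
         [exists ei in nabla E pi,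
            [&& (rk ei < rk ej), ei \notin T &
                [exists C : {set {set V}},
                   [&& is_cycle E C, C \subset T :|: [set ei] & ej \in C]]]]]].
Proof.
apply/idP/idP.
  case/and3P => hB hpi /forallP hc.
  have hc' e : e \in nab -> cond T e by move=> en; have := hc e; rewrite en.
  have sp := spanS hB hpi hc'.
  apply/and4P; split => //.
  - apply/maxsetP; split => // U hU sTU; apply/eqP; rewrite eqEsubset sTU andbT.
    apply/subsetP => f fU; apply/negPn/negP => fT.
    have fE := subsetP (B_subE hU) f fU.
    have hB' : T :|: [set f] \in BG E rk.
      by apply: B_sub hU _; rewrite subUset sTU sub1set fU.
    by have := B_add_ninc HE (B_subE hB) fE fT hB'; rewrite sp.
  - apply/forallP => e1; apply/implyP => e1n; apply/implyP => /forallP hmin.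
    apply/negP => e1T.
    have := hc' e1 e1n; rewrite /cond e1T /= => /andP[_ /existsP[k /andP[kn /and3P[kr _ _]]]].
    by have := hmin k; rewrite kn /= leqNgt kr.
  - apply/forallP => ej; apply/implyP => ejn; apply/implyP => /andP[ejT _].
    have := hc' ej ejn; rewrite /cond ejT /= => /andP[_ /existsP[k /andP[kn /and3P[kr kT ki]]]].
    apply/existsP; exists k; rewrite kn kr kT /=.
    have kE := nab_E kn.
    have [a [b [ab ke]]] := edge2 HE kE.
    have ik := sp k kE; rewrite ke incP in ik.
    have := cyc_A (B_subE hB) _ ab _ ik; rewrite -ke => /(_ kE kT) [C [cC sub kC]].
    apply/existsP; exists C; rewrite cC sub /=; apply/negPn/negP => ejC.
    apply: (negP ki); apply: inc_mono (cyc_B HE cC kC).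
    apply/subsetP => x; rewrite !inE => /andP[xk xC].
    have := subsetP sub x xC; rewrite !inE (negbTE xk) orbF => ->; rewrite andbT.
    by apply/eqP => xe; move: ejC; rewrite -xe xC.
case/and4P => hmax hpi he1 hej.
have hB := maxsetp hmax.
have sp f : f \in E -> inc T f.
  move=> fE; case: (boolP (inc T f)) => // nf.
  have P0 : [pred g | (g \in E) && ~~ inc T g] f by apply/andP; split.
  case: (arg_minnP rk P0) => g /andP[gE ng] hmin.
  have hB' : T :|: [set g] \in BG E rk.
    apply: B_add => // h hE hr; case: (boolP (inc T h)) => // nh.
    by have := hmin h; rewrite /= hE nh => /(_ isT); rewrite leqNgt hr.
  case/maxsetP: hmax => _ /(_ _ hB' (subsetUl _ _)) h.
  have gT : g \in T by rewrite -h !inE eqxx orbT.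
  by move: ng; rewrite inc_self // HE.
apply/and3P; split => //; apply/forallP => e; apply/implyP => en.
rewrite /cond sp ?nab_E //=; apply/implyP => eT.
case: (boolP [forall f in nab, rk e <= rk f]) => hm.
  by have := (forallP he1) e; rewrite en hm eT.
have [f fn fr] : exists2 f, f \in nab & rk f < rk e.
  move/forallPn: hm => [f]; rewrite negb_imply => /andP[fn]; rewrite -ltnNge => fr.
  by exists f.
have := (forallP hej) e; rewrite en eT /=.
have -> : [exists f in nabla E pi, rk f < rk e] by apply/existsP; exists f; rewrite fn fr.
move=> /existsP[ei /andP[ein /and3P[eir eiT /existsP[C /and3P[cC sub eC]]]]].
apply/existsP; exists ei; rewrite ein eir eiT /=.
apply/negP => hi.
have := B_ninc HE hB eT; apply/negP/negPn.
have hce := cyc_B HE cC eC.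
apply: (inc_trans (A := [set ei])); first by move=> x /set1P ->.
apply: inc_mono hce; apply/subsetP => x; rewrite !inE => /andP[xe xC].
have := subsetP sub x xC; rewrite !inE => /orP[xT|->]; last by rewrite orbT.
by rewrite xT xe.
Qed.

End Main2.

Unset Implicit Arguments. Set Strict Implicit. Set Printing Implicit Defensive.
Local Open Scope ring_scope.

Theorem lemma3p4 (V : finType) (E : {set {set V}}) (rk : {set V} -> nat)
  (HE : forall e, e \in E -> #|e| = 2%N)
  (Hrk : {in E &, injective rk})
  (pi : {set {set V}}) (Hpi : pi \in BG E rk) :
  \sum_(sigma in BG E rk | pi \subset sigma) (-1) ^+ ell sigma
  = ((-1) ^+ ell E * (#|[set T : {set {set V}} |
        [&& maxset (fun S => S \in BG E rk) T, pi \subset T,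
            (* e_1 (the smallest edge of nabla(pi)) is not in T *)
            [forall e1 in nabla E pi,
               [forall f in nabla E pi, (rk e1 <= rk f)%N] ==> (e1 \notin T)] &
            (* for every e_j (j > 1) in T there is i < j with e_i notin T
               and e_j on the cycle of G(T U {e_i}) *)
            [forall ej in nabla E pi,
               ((ej \in T) && [exists f in nabla E pi, (rk f < rk ej)%N]) ==>
               [exists ei in nabla E pi,
                  [&& (rk ei < rk ej)%N, ei \notin T &
                      [exists C : {set {set V}},
                         [&& is_cycle E C, C \subset T :|: [set ei] & ej \in C]]]]]]]|
       )%:R :> int).
Proof.
rewrite (eq_bigl (Gt E rk pi 0)); last by move=> S; rewrite Gt0.
rewrite (sum_Gt HE Hrk pi (tmax E rk)).
rewrite (eq_bigr (fun _ => (-1) ^+ ell E)); last first.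
  move=> S; rewrite Gt_max => /and3P[hB hpi /forallP hc].
  rewrite (ell_span (B_subE hB)) //; apply: (spanS HE hB hpi) => e en.
  by have := hc e; rewrite en.
rewrite mulr_natr -sumr_const; apply: eq_bigl => S.
by rewrite inE Gt_max (Nset_iff HE Hrk).
Qed.
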